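(* Consider the replace-after-random-time process with failure rate $\lambda>0$ and replacement-time density $f$. If there exist $\epsilon>0$ and $\delta>0$ such that $f(r)<r^{\epsilon}$ for all $0<r<\delta$, then $E[N(t)]<\infty$ for every $t>0$.
   Context: Let $X_1,X_2,\ldots$ be independent random variables, each exponentially distributed with rate $\lambda>0$ (density $\lambda e^{-\lambda x}$ for $x>0$). Let $R$ be a random variable, independent of $X_1,X_2,\ldots$, with an absolutely continuous distribution on $(0,\infty)$ with probability density function $f$. For $t\ge0$ define $N(t)=\max\{n\ge0:\sum_{k=1}^n\min(X_k,R)\le t\}$; $\{N(t)\}$ is called the replace-after-random-time (RaRT) process. *)

(* Defs.v *)
From HB Require Import structures.
From mathcomp Require Import all_boot all_order all_algebra.
From mathcomp Require Import all_classical all_reals all_analysis.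
Set Implicit Arguments. Unset Strict Implicit. Unset Printing Implicit Defensive.
Import Order.TTheory GRing.Theory Num.Theory.
Import numFieldTopology.Exports.
Local Open Scope classical_set_scope.
Local Open Scope ring_scope.

Definition mutually_independent {d} {T : measurableType d} {R : realType}
  (P : probability T R) (Y : nat -> T -> R) : Prop :=
  forall (s : seq nat) (B : nat -> set R), uniq s ->
    (forall i, measurable (B i)) ->
    P (\bigcap_(i in [set` s]) (Y i @^-1` B i)) =
    (\prod_(i <- s) P (Y i @^-1` B i))%E.

(* The family (R, X_1, X_2, ...): index 0 is R, index k.+1 is X_{k+1}
   (stored as X k). *)
Definition rart_family {T} {R : realType} (Rv : T -> R) (X : nat -> T -> R)
  : nat -> T -> R := fun i => if i is k.+1 then X k else Rv.

Definition rart_partial_sum {T} {R : realType} (Rv : T -> R)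
  (X : nat -> T -> R) (w : T) (n : nat) : R :=
  \sum_(k < n) Num.min (X k w) (Rv w).

(* N(t) = max {n >= 0 : S_n <= t}, as an extended real (+oo if unbounded) *)
Definition rart_N {T} {R : realType} (Rv : T -> R) (X : nat -> T -> R)
  (t : R) (w : T) : \bar R :=
  ereal_sup [set (n%:R)%:E | n in [set n : nat | rart_partial_sum Rv X w n <= t]].

(* Main.v *)
Require Import Defs.
From HB Require Import structures.
From mathcomp Require Import all_boot all_order all_algebra.
From mathcomp Require Import all_classical all_reals all_analysis.
From mathcomp Require Import zify.
From mathcomp.algebra_tactics Require Import ring lra.
Import Order.TTheory GRing.Theory Num.Theory.
Import numFieldTopology.Exports.
Local Open Scope classical_set_scope.
Local Open Scope ring_scope.

Definition aa {R : realType} (c : R) (j : nat) : R := c * (2^-1) ^+ j.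
Definition Lset {R : realType} (c : R) (j : nat) : set R :=
  if j is 0 then `[c, +oo[ else `[aa c j, 2 * aa c j[.
Definition Bfam {R : realType} (c : R) (j : nat) (i : nat) : set R :=
  if i is 0 then Lset c j else `[0, aa c j[.
Definition sq {n : nat} (A : {set 'I_n}) : seq nat :=
  0%N :: [seq (val k).+1 | k <- enum A].
Definition Rect {T} {R : realType} (Rv : T -> R) (X : nat -> T -> R) (c : R)
  (j : nat) {n : nat} (A : {set 'I_n}) : set T :=
  \bigcap_(i in [set` sq A]) (rart_family Rv X i @^-1` Bfam c j i).
Definition MM {R : realType} (t c : R) (j : nat) : nat :=
  (Num.truncn (2 * t / aa c j)).+1.
Definition Ev {T} {R : realType} (Rv : T -> R) (X : nat -> T -> R) (t c : R)
  (j n : nat) : set T :=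
  if (n < MM t c j)%N then Rv @^-1` Lset c j
  else \bigcup_(A in [set A : {set 'I_n} | (n <= 2 * #|A|)%N]) Rect Rv X c j A.

Lemma aa_gt0 {R : realType} (c : R) j : 0 < c -> 0 < aa c j.
Proof. by move=> c0; rewrite /aa mulr_gt0// exprn_gt0// invr_gt0. Qed.

Lemma aaS {R : realType} (c : R) j : aa c j = 2 * aa c j.+1.
Proof. by rewrite /aa exprS [RHS]mulrCA; congr (_ * _); rewrite mulrA mulfV ?mul1r. Qed.

Lemma level_exists {R : realType} (c r : R) : 0 < c -> 0 < r ->
  exists j, Lset c j r.
Proof.
move=> c0 r0.
have [cr|rc] := leP c r.
  by exists 0%N; rewrite /Lset /= in_itv /= cr.
have ex : exists j, aa c j <= r.
  exists (Num.truncn (c / r)).+1.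
  rewrite /aa exprVn -ler_pdivlMr; last by rewrite invr_gt0 exprn_gt0.
  rewrite invrK -ler_pdivrMl// mulrC.
  have := Num.Theory.truncn_itv (ltW (divr_gt0 c0 r0)) => /andP[_ h].
  apply: (le_trans (ltW h)).
  rewrite -natrX ler_nat; apply: ltnW; exact: ltn_expl.
case: (ex_minnP ex) => j hj hmin.
case: j hj hmin => [|j] hj hmin.
  by move: hj; rewrite /aa expr0 mulr1 leNgt rc.
exists j.+1; rewrite /Lset /= in_itv /= hj /=.
rewrite -aaS ltNge; apply/negP => h; have := hmin j h; by rewrite ltnn.
Qed.

Lemma psumS {T} {R : realType} (Rv : T -> R) (X : nat -> T -> R) w n :
  rart_partial_sum Rv X w n.+1 =
  rart_partial_sum Rv X w n + Num.min (X n w) (Rv w).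
Proof. by rewrite /rart_partial_sum big_ord_recr. Qed.

Lemma psum_le {T} {R : realType} (Rv : T -> R) (X : nat -> T -> R) w m n :
  (forall k, 0 <= Num.min (X k w) (Rv w)) -> (m <= n)%N ->
  rart_partial_sum Rv X w m <= rart_partial_sum Rv X w n.
Proof.
move=> h0; elim: n => [|n ih]; first by rewrite leqn0 => /eqP ->.
rewrite leq_eqVlt => /orP[/eqP -> //|]; rewrite ltnS => /ih hm.
by rewrite psumS (le_trans hm)// lerDl.
Qed.

Lemma cnt_le {T} {R : realType} (Rv : T -> R) (X : nat -> T -> R) w n (a : R) :
  0 <= a -> a <= Rv w -> (forall k, 0 <= X k w) ->
  a * (#|[set k : 'I_n | a <= X k w]%SET|)%:R <= rart_partial_sum Rv X w n.
Proof.
move=> a0 aR X0.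
have -> : a * (#|[set k : 'I_n | a <= X k w]%SET|)%:R =
  \sum_(k in [set k : 'I_n | a <= X k w]%SET) a by rewrite sumr_const mulr_natr.
rewrite big_mkcond /rart_partial_sum /=.
apply: ler_sum => k _; case: ifP => h; [move: h; rewrite inE => h|].
  by rewrite le_min h aR.
by rewrite le_min X0 (le_trans a0 aR).
Qed.

Lemma pointwise {T} {R : realType} (Rv : T -> R) (X : nat -> T -> R) (t c : R) (N0 : set T) w :
  0 < c -> 0 <= t -> (~ N0 w -> 0 < Rv w /\ forall k, 0 <= X k w) ->
  exists j, forall n0, rart_partial_sum Rv X w n0 <= t ->
    forall n, (n < n0)%N -> (Ev Rv X t c j n `|` N0) w.
Proof.
move=> c0 t0 H.
case: (pselect (N0 w)) => [Nw|Nw].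
  by exists 0%N => *; right.
have [R0 X0] := H Nw.
have [j hj] := @level_exists R c (Rv w) c0 R0.
exists j => n0 hn0 n nn0; left.
have a0 : 0 < aa c j by exact: aa_gt0.
have aR : aa c j <= Rv w.
  move: hj; case: j {a0} => [|j] /=; rewrite in_itv /=.
    by rewrite /aa expr0 mulr1 andbT.
  by case/andP.
have hn : rart_partial_sum Rv X w n <= t.
  apply: le_trans hn0; apply: psum_le (ltnW nn0) => k.
  by rewrite le_min X0 ltW.
have hc := le_trans (@cnt_le T R Rv X w n _ (ltW a0) aR X0) hn.
rewrite /Ev; case: ifP => hM; first exact: hj.
exists [set k : 'I_n | X k w < aa c j]%SET.
  rewrite /=.
  have hC : [set k : 'I_n | aa c j <= X k w]%SET = ~: [set k : 'I_n | X k w < aa c j]%SET.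
    by apply/setP => k; rewrite !inE leNgt.
  move: hc; rewrite hC => hc.
  have Hn := cardsC [set k : 'I_n | X k w < aa c j]%SET; rewrite card_ord in Hn.
  have h2 : (2 * #|~: [set k : 'I_n | (X k w < aa c j)%R]%SET| < n)%N.
    rewrite -(ltr_nat R) natrM.
    have := Num.Theory.truncn_itv (divr_ge0 (mulr_ge0 (ler0n _ 2) t0) (ltW a0)).
    move=> /andP[_ ht].
    have hMn : ((MM t c j)%:R <= n%:R :> R) by rewrite ler_nat leqNgt hM.
    rewrite /MM in hMn.
    have h1 : 2 * t / aa c j < n%:R := lt_le_trans ht hMn.
    rewrite ltr_pdivrMr // in h1.
    rewrite -(ltr_pM2r a0); apply: le_lt_trans h1.
    by rewrite -mulrA [_ * aa c j]mulrC ler_wpM2l.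
  have h3 : (n <= 2 * #|[set k : 'I_n | (X k w < aa c j)%R]%SET|)%N by lia.
  exact: h3.
move=> i /=; rewrite /sq inE => /orP[/eqP -> //|].
move=> /mapP[k]; rewrite mem_enum inE => hk ->.
by rewrite /= in_itv /= X0 hk.
Qed.


Lemma union_bound_seq d (T : measurableType d) (R : realType)
  (mu : {measure set T -> \bar R}) (I : eqType) (s : seq I) (Dp : pred I)
  (F : I -> set T) : (forall i, measurable (F i)) ->
  (mu (\bigcup_(i in [set i | i \in s /\ Dp i]) F i) <=
   \sum_(i <- s | Dp i) mu (F i))%E.
Proof.
move=> mF; elim: s => [|x s ih].
  rewrite big_nil (_ : \bigcup_(i in _) F i = set0) ?measure0//.
  by apply/seteqP; split => // w [i [] /=].
have mU : measurable (\bigcup_(i in [set i | i \in s /\ Dp i]) F i).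
  apply: fin_bigcup_measurable => //; apply: (sub_finite_set _ (finite_seq s)).
  by move=> i [].
rewrite big_cons; case: ifP => hx.
  apply: le_trans (leeD (lexx _) ih).
  apply: le_trans (measureU2 _ _ _) => //.
  apply: le_measure; rewrite ?inE //.
  - apply: fin_bigcup_measurable => //; apply: (sub_finite_set _ (finite_seq (x :: s))).
    by move=> i [].
  - exact: measurableU.
  move=> w [i [+ Di] Fw]; rewrite inE => /orP[/eqP ei|iss]; first by left; rewrite -ei.
  by right; exists i.
apply: le_trans ih; apply: le_measure; rewrite ?inE //.
  apply: fin_bigcup_measurable => //; apply: (sub_finite_set _ (finite_seq (x :: s))).
  by move=> i [].
move=> w [i [+ Di] Fw]; rewrite inE => /orP[/eqP ei|iss]; first by move: Di; rewrite ei hx.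
by exists i.
Qed.

Lemma prod_le_pow (R : realType) (I : Type) (s : seq I) (f : I -> \bar R) (p : R) :
  0 <= p -> (forall i, 0 <= f i <= p%:E)%E ->
  (\prod_(i <- s) f i <= (p ^+ size s)%:E)%E.
Proof.
move=> p0 hf; elim: s => [|x s ih]; first by rewrite big_nil expr0.
rewrite big_cons /= exprS EFinM; apply: lee_pmul => //.
- by case/andP: (hf x).
- by apply: prode_ge0 => i; case/andP: (hf i).
- by case/andP: (hf x).
Qed.


Lemma Lset_meas {R : realType} (c : R) j : measurable (Lset c j).
Proof. by case: j => [|j]; exact: measurable_itv. Qed.

Lemma Bfam_meas {R : realType} (c : R) j i : measurable (Bfam c j i).
Proof. by case: i => [|i]; [exact: Lset_meas|exact: measurable_itv]. Qed.

Lemma Rect_meas d (T : measurableType d) (R : realType)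
  (Rv : {mfun T >-> R}) (X : nat -> {mfun T >-> R}) c j n (A : {set 'I_n}) :
  measurable (Rect Rv (fun k => X k) c j A).
Proof.
apply: fin_bigcap_measurable; first exact: finite_seq.
move=> [|i] _ /=; [exact: (measurable_funPTI Rv (Bfam_meas c j 0))|exact: (measurable_funPTI (X i) (Bfam_meas c j i.+1))].
Qed.

Lemma Rect_prob d (T : measurableType d) (R : realType) (P : probability T R)
  (Rv : {mfun T >-> R}) (X : nat -> {mfun T >-> R}) c j n (A : {set 'I_n})
  (b p : R) :
  mutually_independent P (rart_family Rv (fun k => X k)) ->
  0 <= p -> (P (Rv @^-1` Lset c j) <= b%:E)%E ->
  (forall k, P (X k @^-1` `[0%R, aa c j[) <= p%:E)%E ->
  (P (Rect Rv (fun k => X k) c j A) <= (b * p ^+ #|A|)%:E)%E.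
Proof.
move=> ind p0 hb hp.
rewrite /Rect ind; last 2 first.
- rewrite /sq /=; apply/andP; split.
    by apply/mapP => -[k _].
  by rewrite map_inj_uniq ?enum_uniq // => x y [] /val_inj.
- exact: Bfam_meas.
rewrite /sq big_cons big_map /= EFinM; apply: lee_pmul => //.
  by apply: prode_ge0 => i.
rewrite cardE; apply: prod_le_pow => // i.
by rewrite measure_ge0 hp.
Qed.


Lemma card_setIn n : #|{set 'I_n}| = (2 ^ n)%N.
Proof.
have -> : (2 ^ n)%N = #|powerset [set: 'I_n]| by rewrite card_powerset cardsT card_ord.
by apply: eq_card => A; rewrite powersetE subsetT_hint ?inE.
Qed.

Lemma Ev_meas d (T : measurableType d) (R : realType)
  (Rv : {mfun T >-> R}) (X : nat -> {mfun T >-> R}) t c j n :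
  measurable (Ev Rv (fun k => X k) t c j n).
Proof.
rewrite /Ev; case: ifP => _.
  exact: (measurable_funPTI Rv (Lset_meas c j)).
apply: fin_bigcup_measurable; first exact: finite_finset.
by move=> A _; exact: Rect_meas.
Qed.

Lemma Ev_prob d (T : measurableType d) (R : realType) (P : probability T R)
  (Rv : {mfun T >-> R}) (X : nat -> {mfun T >-> R}) t c j n (b p : R) :
  mutually_independent P (rart_family Rv (fun k => X k)) ->
  0 <= b -> 0 <= p -> p <= 16^-1 ->
  (P (Rv @^-1` Lset c j) <= b%:E)%E ->
  (forall k, P (X k @^-1` `[0%R, aa c j[) <= p%:E)%E ->
  (P (Ev Rv (fun k => X k) t c j n) <=
     (b * ((n < MM t c j)%N%:R + (2^-1) ^+ n))%:E)%E.
Proof.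
move=> ind b0 p0 p16 hb hp.
rewrite /Ev; case: ifP => hn.
  apply: le_trans hb _; rewrite lee_fin mulrDr mulr1 lerDl.
  by rewrite mulr_ge0 // exprn_ge0.
have -> : [set A : {set 'I_n} | (n <= 2 * #|A|)%N] =
  [set A | A \in index_enum {set 'I_n} /\ (n <= 2 * #|A|)%N].
  by apply/seteqP; split => A /=; rewrite mem_index_enum //; case.

have hU := (@union_bound_seq _ _ _ P _ (index_enum {set 'I_n})
  (fun A : {set 'I_n} => (n <= 2 * #|A|)%N) (fun A => Rect Rv (fun k => X k) c j A) (@Rect_meas _ _ _ Rv X c j n)).
apply: (le_trans hU).
apply: (@le_trans _ _ (\sum_(A : {set 'I_n}) (b * (4^-1) ^+ n)%:E)%E).
  rewrite big_mkcond /=.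
  apply: lee_sum => A _; case: ifP => hA; last by rewrite lee_fin mulr_ge0// exprn_ge0.
  have hR := (@Rect_prob _ _ _ P Rv X c j n A b p ind p0 hb hp).
  apply: (le_trans hR).
  rewrite lee_fin ler_wpM2l //.
  apply: (@le_trans _ _ ((16^-1) ^+ #|A|)).
    by rewrite lerXn2r // nnegrE.
  have -> : (16^-1 : R) = (4^-1) ^+ 2 by rewrite exprVn; congr (_^-1); ring.
  rewrite -exprM; apply: ler_wiXn2l => //.
  by rewrite invf_le1 // ler1n.
rewrite sumEFin sumr_const card_setIn lee_fin -mulrnAr ler_wpM2l //= add0r.
rewrite -mulr_natr natrX -exprMn; apply: lerXn2r; rewrite ?nnegrE //.
by rewrite le_eqVlt; apply/orP; left; apply/eqP; field.
Qed.


Lemma sum_ltM {R : realType} (M N : nat) :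
  \sum_(0 <= n < N) ((n < M)%N%:R : R) = (minn N M)%:R.
Proof.
elim: N => [|N ih]; first by rewrite big_geq // min0n.
rewrite big_nat_recr //= ih -natrD; congr (_%:R).
case: (ltnP N M) => h /=; lia.
Qed.

Lemma sum_geo2 {R : realType} (N : nat) :
  \sum_(0 <= n < N) ((2^-1) ^+ n : R) <= 2.
Proof.
have h1 : (0 : R) < 2^-1 by rewrite invr_gt0 ltr0n.
have h2 : `|(2^-1 : R)| < 1 by rewrite ger0_norm ?invr_ge0 ?invf_lt1 ?ltr1n ?ler0n.
have := @geometric_le_lim R N 1 (2^-1) ler01 h1 h2.
rewrite /series /=.
have -> : (1 / (1 - 2^-1) : R) = 2 by field.
move=> h; apply: le_trans h.
by under [X in _ <= X]eq_bigr do rewrite mul1r.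
Qed.

Lemma series_n {R : realType} (b : R) (M : nat) : 0 <= b ->
  (\sum_(n <oo) (b * ((n < M)%N%:R + 2^-1 ^+ n))%:E <= (b * (M%:R + 2))%:E)%E.
Proof.
move=> b0; apply: lime_le.
  apply: is_cvg_nneseries => n _ _; rewrite lee_fin mulr_ge0 // addr_ge0 // exprn_ge0 //.
apply: nearW => N; rewrite sumEFin lee_fin -mulr_sumr ler_wpM2l // big_split /=.
apply: lerD; last exact: sum_geo2.
by rewrite sum_ltM ler_nat geq_minr.
Qed.

Lemma PX_bound d (T : measurableType d) (R : realType) (P : probability T R)
  (lam : R) (X : nat -> {mfun T >-> R}) (a : R) k : 0 < a ->
  (forall k (B : set R), measurable B ->
     P (X k @^-1` B) = exponential_prob lam B) ->
  (P (X k @^-1` `[0%R, a[) <= (lam * a)%:E)%E.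
Proof.
move=> a0 hX.
apply: (@le_trans _ _ (P (X k @^-1` `[0%R, a]))).
  apply: le_measure; rewrite ?inE; try exact: (measurable_funPTI (X k) (measurable_itv _)).
  by move=> w /=; rewrite !in_itv /= => /andP[-> /ltW ->].
rewrite hX; last exact: measurable_itv.
rewrite exponential_prob_itv0c //.
rewrite lee_fin lerBlDr addrC -lerBlDr.
by have := expR_ge1Dx (- lam * a); rewrite mulNr.
Qed.

Lemma PL_bound d (T : measurableType d) (R : realType) (P : probability T R)
  (Rv : {mfun T >-> R}) (f : R -> R) (eps delta c : R) j :
  0 < c -> c <= delta -> 0 <= eps ->
  measurable_fun (`]0, +oo[ : set R) f ->
  (forall x, 0 < x -> 0 <= f x) ->
  (forall B : set R, measurable B ->
     P (Rv @^-1` B) =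
     (\int[lebesgue_measure]_(x in B `&` (`]0%R, +oo[ : set R)) (f x)%:E)%E) ->
  (forall r, 0 < r -> r < delta -> f r < r `^ eps) ->
  (P (Rv @^-1` Lset c j.+1) <= ((aa c j) `^ eps * aa c j.+1)%:E)%E.
Proof.
move=> c0 cd e0 mf f0 hR hf.
have a1 := @aa_gt0 R c j.+1 c0.
have ac : aa c j <= c.
  rewrite /aa ger_pMr // exprn_ile1 // ?invr_ge0 ?ler0n //.
  by rewrite invf_le1 // ler1n.
have hL : Lset c j.+1 = `[aa c j.+1, aa c j[%classic by rewrite /Lset -aaS.
rewrite hR ?Lset_meas // hL.
set D := `[aa c j.+1, aa c j[%classic `&` `]0%R, +oo[%classic.
have mD : measurable D by apply: measurableI; exact: measurable_itv.
apply: (@le_trans _ _ (\int[lebesgue_measure]_(x in D) (cst ((aa c j) `^ eps)%:E) x)%E).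
  apply: ge0_le_integral => //.
  - by move=> x [_]; rewrite /= in_itv /= andbT => x0; rewrite lee_fin f0.
  - apply/measurable_realfun.measurable_EFinP; apply: measurable_funS mf => //.
    by move=> x [].
  - move=> x [] /=; rewrite !in_itv /= andbT => /andP[_ xa] x0.
    rewrite lee_fin; apply: (le_trans (ltW (hf x x0 _))).
      exact: lt_le_trans xa (le_trans ac cd).
    by apply: ge0_ler_powR => //; rewrite ?nnegrE ?ltW // (lt_trans x0 xa).
rewrite integral_cst // EFinM; apply: lee_wpmul2l; first by rewrite lee_fin powR_ge0.
apply: (@le_trans _ _ (lebesgue_measure (`[aa c j.+1, aa c j[ : set R))).
  apply: le_measure; rewrite ?inE //. all: try exact: measurable_itv. all: try exact: subIsetl.
rewrite lebesgue_measure_itv /= lte_fin.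
have -> : (aa c j.+1 < aa c j) = true by rewrite [aa c j]aaS; lra.
rewrite -EFinD lee_fin [aa c j]aaS; lra.
Qed.

Lemma bad_null d (T : measurableType d) (R : realType) (P : probability T R)
  (lam : R) (X : nat -> {mfun T >-> R}) (Rv : {mfun T >-> R}) (f : R -> R) :
  (forall k (B : set R), measurable B ->
     P (X k @^-1` B) = exponential_prob lam B) ->
  (forall B : set R, measurable B ->
     P (Rv @^-1` B) =
     (\int[lebesgue_measure]_(x in B `&` (`]0%R, +oo[ : set R)) (f x)%:E)%E) ->
  exists N0 : set T, [/\ measurable N0, P N0 = 0%E &
    forall w, ~ N0 w -> 0 < Rv w /\ forall k, 0 <= X k w].
Proof.
move=> hX hR.
have h1 : P.-negligible (Rv @^-1` `]-oo, 0%R]).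
  exists (Rv @^-1` `]-oo, 0%R]); split => //.
    exact: (measurable_funPTI Rv (measurable_itv _)).
  rewrite hR; last exact: measurable_itv.
  rewrite (_ : _ `&` _ = set0) ?integral_set0 //.
  apply/seteqP; split => // x [] /=; rewrite !in_itv /= andbT => x0 x0'.
  by move: (lt_le_trans x0' x0); rewrite ltxx.
have h2 k : P.-negligible (X k @^-1` `]-oo, 0%R[).
  exists (X k @^-1` `]-oo, 0%R[); split => //.
    exact: (measurable_funPTI (X k) (measurable_itv _)).
  rewrite hX; last exact: measurable_itv.
  rewrite /exponential_prob integral0_eq // => x /=; rewrite in_itv /= => x0.
  by rewrite lt0_exponential_pdf.
have [N0 [mN0 PN0 sub]] := negligibleU h1 (negligible_bigcup h2).
exists N0; split => // w Nw; split.
  rewrite ltNge; apply/negP => h; apply: Nw; apply: sub; left => /=.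
  by rewrite in_itv /= h.
move=> k; rewrite leNgt; apply/negP => h; apply: Nw; apply: sub; right.
by exists k => //=; rewrite in_itv /= h.
Qed.


Lemma rartN_ge0 {T} {R : realType} (Rv : T -> R) (X : nat -> T -> R) t w :
  0 <= t -> (0 <= rart_N Rv X t w)%E.
Proof.
move=> t0; apply: ereal_sup_ubound; exists 0%N => //=.
by rewrite /rart_partial_sum big_ord0.
Qed.

Lemma rartN_le {T} {R : realType} (Rv : T -> R) (X : nat -> T -> R) t
  (E : nat -> set T) w :
  (forall n0, rart_partial_sum Rv X w n0 <= t -> forall n, (n < n0)%N -> E n w) ->
  (rart_N Rv X t w <= \sum_(n <oo) (\1_(E n) w)%:E)%E.
Proof.
move=> h; apply: ge_ereal_sup => _ [n0 /= hn0 <-].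
apply: le_trans (nneseries_lim_ge (m := 0%N) n0 _); last first.
  by move=> n _ _; rewrite lee_fin indicE ler0n.
rewrite (eq_big_nat _ _ (F2 := fun=> 1%E)); last first.
  move=> i /andP[_ hi]; rewrite indicE mem_set //; exact: (h _ hn0 _ hi).
by rewrite sumEFin sumr_const_nat subn0 lee_fin -mulr_natl mulr1.
Qed.

Lemma powR_exprn {R : realType} (q e : R) n : 0 <= q ->
  (q ^+ n) `^ e = (q `^ e) ^+ n.
Proof.
move=> q0; elim: n => [|n ih]; first by rewrite !expr0 powR1.
by rewrite !exprS powRM ?exprn_ge0 // ih.
Qed.

Lemma geo_eseries {R : realType} (K r : R) : 0 <= K -> 0 < r -> r < 1 ->
  (\sum_(j <oo) (K * r ^+ j)%:E <= (K / (1 - r))%:E)%E.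
Proof.
move=> K0 r0 r1; apply: lime_le.
  by apply: is_cvg_nneseries => n _ _; rewrite lee_fin mulr_ge0 // exprn_ge0 // ltW.
apply: nearW => N; rewrite sumEFin lee_fin.
have h1 : `|r| < 1 by rewrite ger0_norm ?ltW.
have := @geometric_le_lim R N K r K0 r0 h1.
by rewrite /series /=.
Qed.


Lemma aa_le {R : realType} (c : R) j : 0 < c -> aa c j <= c.
Proof.
move=> c0; rewrite /aa ger_pMr // exprn_ile1 // ?invr_ge0 ?ler0n //.
by rewrite invf_le1 // ler1n.
Qed.

Lemma MM_le {R : realType} (t c : R) j : 0 <= t -> 0 < c ->
  (MM t c j)%:R <= 2 * t / aa c j + 1.
Proof.
move=> t0 c0; rewrite /MM -addn1 natrD lerD2r.
rewrite Num.Theory.truncn_le divr_ge0 // ?mulr_ge0 // ltW //; exact: aa_gt0.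
Qed.

Definition rr {R : realType} (eps : R) := (2^-1) `^ eps.
Definition KK {R : realType} (t c eps : R) :=
  ((MM t c 0)%:R + 2) + c `^ eps * (2 * t + 3 * c) / rr eps.
Definition bb {R : realType} (c eps : R) j :=
  if j is j'.+1 then (aa c j') `^ eps * aa c j'.+1 else 1.

Lemma bM_le {R : realType} (t c eps : R) j : 0 <= t -> 0 < c -> 0 <= eps ->
  bb c eps j * ((MM t c j)%:R + 2) <= KK t c eps * rr eps ^+ j.
Proof.
move=> t0 c0 e0; rewrite /bb /KK; set r := rr eps; set K := _ + _ / r.
have r0 : 0 < r by rewrite /r powR_gt0 // invr_gt0.
have K1 : 0 <= c `^ eps * (2 * t + 3 * c) / r.
  apply: divr_ge0; [apply: mulr_ge0; [exact: powR_ge0|lra] | exact: ltW].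
case: j => [|j].
  by rewrite mul1r expr0 mulr1 /K lerDl.
set a := aa c j.+1.
have a0 : 0 < a by exact: aa_gt0.
have ac : a <= c by exact: aa_le.
have hM := @MM_le R t c j.+1 t0 c0; rewrite -/a in hM.
apply: (@le_trans _ _ ((aa c j) `^ eps * (2 * t + 3 * c))).
  rewrite -mulrA ler_wpM2l ?powR_ge0 //.
  apply: (@le_trans _ _ (a * (2 * t / a + 3))).
    apply: ler_wpM2l; [exact: ltW | lra].
  have -> : a * (2 * t / a + 3) = 2 * t + 3 * a by field; lra.
  lra.
have -> : aa c j `^ eps = c `^ eps * r ^+ j.
  by rewrite /aa powRM ?ltW ?exprn_ge0 ?invr_ge0 // powR_exprn // invr_ge0.
apply: (@le_trans _ _ ((c `^ eps * (2 * t + 3 * c) / r) * r ^+ j.+1)).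
  rewrite exprS mulrA divfK ?gt_eqF //; lra.
apply: ler_wpM2r; first by rewrite exprn_ge0 // ltW.
by rewrite /K lerDr addr_ge0 // ler0n.
Qed.


Theorem mainTheorem11 (d : measure_display) (T : measurableType d)
  (R : realType) (P : probability T R)
  (lam : R) (X : nat -> {mfun T >-> R}) (Rv : {mfun T >-> R}) (f : R -> R) :
  0 < lam ->
  (forall k (B : set R), measurable B ->
     P (X k @^-1` B) = exponential_prob lam B) ->
  measurable_fun (`]0, +oo[ : set R) f ->
  (forall x, 0 < x -> 0 <= f x) ->
  (forall B : set R, measurable B ->
     P (Rv @^-1` B) =
     (\int[lebesgue_measure]_(x in B `&` (`]0%R, +oo[ : set R)) (f x)%:E)%E) ->
  mutually_independent P (rart_family Rv (fun k => X k)) ->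
  (exists eps : R, exists delta : R, 0 < eps /\ 0 < delta /\
     forall r, 0 < r -> r < delta -> f r < r `^ eps) ->
  forall t : R, 0 < t ->
    (\int[P]_w rart_N Rv (fun k => X k) t w < +oo)%E.
Proof.
move=> lam0 hX mf f0 hR ind [eps [delta [e0 [d0 hf]]]] t t0.
have [N0 [mN0 PN0 hgood]] := @bad_null d T R P lam X Rv f hX hR.
pose c := Num.min (delta / 2) ((16 * lam)^-1).
have c0 : 0 < c by rewrite lt_min divr_gt0 //= invr_gt0 mulr_gt0.
have cd : c <= delta by rewrite ge_min; apply/orP; left; lra.
have lc : lam * c <= 16^-1.
  have : c <= (16 * lam)^-1 by rewrite ge_min lexx orbT.
  move=> h; apply: (le_trans (ler_wpM2l (ltW lam0) h)).
  by rewrite invfM mulrCA mulfV ?gt_eqF // mulr1.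
have hb j : (P (Rv @^-1` Lset c j) <= (bb c eps j)%:E)%E.
  case: j => [|j].
    by apply: probability_le1; exact: (measurable_funPTI Rv (Lset_meas c 0)).
  exact: (@PL_bound d T R P Rv f eps delta c j c0 cd (ltW e0) mf f0 hR hf).
have b0 j : 0 <= bb c eps j.
  by case: j => [|j] //=; rewrite mulr_ge0 ?powR_ge0 // ltW // aa_gt0.
have hp j k : (P (X k @^-1` `[0%R, aa c j[) <= (lam * aa c j)%:E)%E.
  exact: (@PX_bound d T R P lam X (aa c j) k (@aa_gt0 R c j c0) hX).
have hp16 j : lam * aa c j <= 16^-1.
  exact: le_trans (ler_wpM2l (ltW lam0) (@aa_le R c j c0)) lc.
have p0 j : 0 <= lam * aa c j by rewrite mulr_ge0 // ltW // aa_gt0.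
have hE j n := @Ev_prob d T R P Rv X t c j n (bb c eps j) (lam * aa c j)
  ind (b0 j) (p0 j) (hp16 j) (hb j) (hp j).
pose F : T -> \bar R := fun w => (\sum_(j <oo) \sum_(n <oo)
  (\1_(Ev Rv (fun k => X k) t c j n `|` N0) w)%:E)%E.
have F0 (w : T) : (0 <= F w)%E.
  apply: nneseries_ge0 => j _ _; apply: nneseries_ge0 => n _ _.
  by rewrite lee_fin indicE ler0n.
have NF (w : T) : (rart_N Rv (fun k => X k) t w <= F w)%E.
  have [j hj] := @pointwise T R Rv (fun k => X k) t c N0 w c0 (ltW t0) (hgood w).
  apply: (le_trans (@rartN_le T R Rv (fun k => X k) t (fun n => Ev Rv (fun k => X k) t c j n `|` N0) w hj)).
  apply: le_trans (nneseries_lim_ge (m := 0%N) j.+1 _); last first.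
    move=> i _ _; apply: nneseries_ge0 => n _ _.
    by rewrite lee_fin indicE ler0n.
  rewrite big_nat_recr //=; rewrite -[X in (X <= _)%E]add0e; apply: leeD => //.
  apply: sume_ge0 => i _; apply: nneseries_ge0 => n _ _.
  by rewrite lee_fin indicE ler0n.
have hint : (\int[P]_w rart_N Rv (fun k => X k) t w <= \int[P]_w F w)%E.
  rewrite !ge0_integralTE //; last by move=> w; exact: rartN_ge0 (ltW t0).
  apply: le_ereal_sup => _ [h hh <-]; exists h => //= x.
  exact: le_trans (hh x) (NF x).
apply: (le_lt_trans hint).
have mEv j n : measurable (Ev Rv (fun k => X k) t c j n `|` N0).
  by apply: measurableU => //; exact: Ev_meas.
rewrite /F integral_nneseries //; last 2 first.
- move=> j; apply: ge0_emeasurable_sum.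
    by move=> k x Hx Ht; rewrite lee_fin indicE ler0n.
  move=> k _; apply/measurable_realfun.measurable_EFinP.
  exact: measurable_realfun.measurable_indic.
- move=> j x _; apply: nneseries_ge0 => n _ _.
  by rewrite lee_fin indicE ler0n.
apply: (@le_lt_trans _ _ ((KK t c eps / (1 - rr eps))%:E)); last exact: ltry.
have r0 : 0 < rr eps by rewrite /rr powR_gt0 // invr_gt0.
have r1 : rr eps < 1.
  have h1 : (1:R) `^ eps = 1 by rewrite powR1.
  rewrite /rr -[X in _ < X]h1.
  by rewrite gt0_ltr_powR ?nnegrE ?invr_ge0 // invf_lt1 // ltr1n.
have K0 : 0 <= KK t c eps.
  have := @bM_le R t c eps 0%N (ltW t0) c0 (ltW e0); rewrite expr0 mulr1 => h.
  by apply: le_trans h; rewrite /bb mul1r addr_ge0.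
apply: (le_trans _ (@geo_eseries R _ _ K0 r0 r1)).
apply: lee_nneseries => [j _ _|j _]; first by apply: integral_ge0 => w _; exact: nneseries_ge0.
rewrite integral_nneseries //.
have hs := @series_n R (bb c eps j) (MM t c j) (b0 j).
have hb2 : ((bb c eps j * ((MM t c j)%:R + 2))%:E <= (KK t c eps * rr eps ^+ j)%:E)%E.
  by rewrite lee_fin; exact: (@bM_le R t c eps j (ltW t0) c0 (ltW e0)).
apply: (le_trans _ (le_trans hs hb2)).
apply: lee_nneseries => [n _ _|n _]; first by apply: integral_ge0 => w _; rewrite lee_fin indicE ler0n.
rewrite integral_indic // setIT.
apply: le_trans (measureU2 _ _ _) _ => //; first exact: Ev_meas.
rewrite [X in (_ + X <= _)%E](_ : _ = 0%E) ?adde0; [exact: hE | exact: PN0].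
move=> n; apply/measurable_realfun.measurable_EFinP.
exact: measurable_realfun.measurable_indic.
Qed.
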